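(* Suppose $\phi_1,\phi_2$ satisfy the Doubrov–Ferapontov modified heavenly hierarchy $(\Phi_1\wedge\Phi_2)_-=0$, and let $u$ be a function with $g_1=u_x$ and $f_1=u_y$ (so that $f_{1,z_j}=u_{yz_j}$, $g_{1,z_j}=u_{xz_j}$). Then the Lax–Sato equations take the Hamiltonian form $$\frac{\partial\vec\phi}{\partial t_n}=\{-\lambda^n y+A_n,\vec\phi\}\ (n\ge1),\qquad \lambda\frac{\partial\vec\phi}{\partial z_j}=\{-\lambda^j x+B_j,\vec\phi\}\ (j\ge2),\qquad \lambda\frac{\partial\vec\phi}{\partial z_1}=\{B_1,\vec\phi\},$$ where $A_n=\sum_{k=1}^{n}\lambda^{n-k}g_k$, $B_j=-\sum_{m=1}^{j}\lambda^{j-m}f_m-u_{z_j}$ for $j\ge2$, and $B_1=-u_{z_1}$.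
   Context: Independent variables are $x,y$ and two infinite families $t_1,t_2,\dots$ and $z_1,z_2,\dots$; write $t:=t_1$, $z:=z_1$. $\lambda$ is a formal spectral parameter; $(\cdot)_+$ and $(\cdot)_-$ denote the parts of a formal Laurent series in $\lambda$ with nonnegative, resp. negative, powers. Consider formal series $\phi_1=-y+\sum_{j\ge2}z_j\lambda^{j-1}+\sum_{k\ge1}g_k\lambda^{-k}$, $\phi_2=x+t_1\lambda+\sum_{n\ge2}t_n\lambda^n+\sum_{m\ge1}f_m\lambda^{-m}$, where $g_k,f_m$ are functions of $(x,y,t_1,t_2,\dots,z_1,z_2,\dots)$, and $\vec\phi=(\phi_1,\phi_2)^T$. Define the 1-forms $\Phi_i=\phi_{i,x}dx+\phi_{i,y}dy+\sum_{n\ge1}\phi_{i,t_n}dt_n+\lambda\sum_{j\ge1}\phi_{i,z_j}dz_j$. The Doubrov–Ferapontov modified heavenly hierarchy is $(\Phi_1\wedge\Phi_2)_-=0$: the negative-power part of the coefficient of every basis 2-form vanishes, the coefficient of $da\wedge db$ being $\lambda^{\epsilon}(\phi_{1,a}\phi_{2,b}-\phi_{1,b}\phi_{2,a})$ with $\epsilon$ the number of $z$-variables among $a,b$. The Poisson bracket is $\{F,G\}=F_xG_y-F_yG_x$, applied componentwise to $\vec\phi$. Subscripts denote partial derivatives. *)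

(* Defs.v *)
(* Abstract model: "functions of (x,y,t_1,t_2,...,z_1,z_2,...)"
   are elements of a commutative ring K equipped with commuting derivations
   d a (one for every independent variable a) and with coordinate elements
   coord a satisfying d a (coord b) = delta_{ab}. *)
From HB Require Import structures.
From mathcomp Require Import all_boot all_order all_algebra.
Set Implicit Arguments. Unset Strict Implicit. Unset Printing Implicit Defensive.
Import Order.TTheory GRing.Theory Num.Theory.
Local Open Scope ring_scope.

(* Independent variables.  Index convention (shifted so that no junk variable
   exists):  Vt n  is  t_(n+1),   Vz j  is  z_(j+1). *)
Inductive var := Vx | Vy | Vt of nat | Vz of nat.

Definition tvar (n : nat) : var := Vt n.-1.
Definition zvar (j : nat) : var := Vz j.-1.

Section DF.
Variable K : comRingType.

(* formal (possibly bi-infinite) series in lambda: p |-> coefficient of lambda^p *)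
Definition fser := int -> K.

Definition is_derivation (D : K -> K) :=
  (forall r s, D (r + s) = D r + D s) /\ (forall r s, D (r * s) = D r * s + r * D s).

Definition mon (n : int) (c : K) : fser := fun p => if p == n then c else 0.

Definition shift (n : int) (s : fser) : fser := fun p => s (p - n).

(* product of two series whose coefficients vanish above degree N
   (Cauchy product, a finite sum for each coefficient) *)
Definition smul (N : nat) (a b : fser) : fser := fun p =>
  if p <= (N + N)%N%:Z then
    \sum_(k < `|(N + N)%N%:Z - p|.+1) a (N%:Z - k%:Z) * b (p - N%:Z + k%:Z)
  else 0.

Variable d : var -> K -> K.
Variable coord : var -> K.
Variables g f : nat -> K.   (* g k = g_k, f m = f_m  (k, m >= 1; index 0 unused) *)
Variable u : K.

Definition dser (a : var) (s : fser) : fser := fun p => d a (s p).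

(* phi_1 = -y + sum_{j>=2} z_j lambda^(j-1) + sum_{k>=1} g_k lambda^(-k) *)
Definition phi1 : fser := fun p =>
  if p < 0 then g `|p|%N
  else if p == 0 then - coord Vy
  else coord (Vz `|p|%N).          (* coefficient of lambda^p, p>=1, is z_(p+1) *)

(* phi_2 = x + t_1 lambda + sum_{n>=2} t_n lambda^n + sum_{m>=1} f_m lambda^(-m) *)
Definition phi2 : fser := fun p =>
  if p < 0 then f `|p|%N
  else if p == 0 then coord Vx
  else coord (Vt `|p|.-1).         (* coefficient of lambda^p, p>=1, is t_p *)

(* an upper bound on the lambda-degree of phi_{i,a} *)
Definition vdeg (a : var) : nat :=
  match a with Vt n => n.+1 | Vz j => j | _ => 0%N end.

Definition zweight (a : var) : nat :=
  match a with Vz _ => 1%N | _ => 0%N end.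

(* coefficient of da /\ db in Phi_1 /\ Phi_2:
   lambda^eps (phi_{1,a} phi_{2,b} - phi_{1,b} phi_{2,a}) *)
Definition wedge (a b : var) : fser :=
  let N := maxn (vdeg a) (vdeg b) in
  shift (zweight a + zweight b)%N%:Z
    (fun p => smul N (dser a phi1) (dser b phi2) p
              - smul N (dser b phi1) (dser a phi2) p).

Definition DF_hierarchy : Prop :=
  forall (a b : var) (p : int), p < 0 -> wedge a b p = 0.

Definition pb (N : nat) (F G : fser) : fser := fun p =>
  smul N (dser Vx F) (dser Vy G) p - smul N (dser Vy F) (dser Vx G) p.

Definition A (n : nat) : fser := fun p =>
  \sum_(1 <= k < n.+1) mon (n - k)%N%:Z (g k) p.

Definition Ht (n : nat) : fser := fun p => - mon n%:Z (coord Vy) p + A n p.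

Definition B (j : nat) : fser := fun p =>
  if (2 <= j)%N then
    - (\sum_(1 <= m < j.+1) mon (j - m)%N%:Z (f m) p) - mon 0 (d (zvar j) u) p
  else - mon 0 (d (zvar 1) u) p.

Definition Hz (j : nat) : fser := fun p =>
  if (2 <= j)%N then - mon j%:Z (coord Vx) p + B j p else B j p.

End DF.

(* Main.v *)
Require Import Defs.
From HB Require Import structures.
From mathcomp Require Import all_boot all_order all_algebra.
From mathcomp Require Import zify ring.
Import Order.TTheory GRing.Theory Num.Theory.
Local Open Scope ring_scope.

Section Aux.
Variable K : comNzRingType.

Definition Pp (M N : nat) (s : fser K) : {poly K} := \poly_(i < M) s (N%:Z - i%:Z).
Definition eqm (M : nat) (p q : {poly K}) := forall i, (i < M)%N -> p`_i = q`_i.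
Definition van (N : int) (s : fser K) := forall q, N < q -> s q = 0.

Lemma eqm_refl M p : eqm M p p. Proof. by []. Qed.
Lemma eqm_sym M p q : eqm M p q -> eqm M q p. Proof. by move=> h i hi; rewrite h. Qed.
Lemma eqm_trans M p q r : eqm M p q -> eqm M q r -> eqm M p r.
Proof. by move=> h1 h2 i hi; rewrite h1 // h2. Qed.
Lemma eqmD M p q p' q' : eqm M p p' -> eqm M q q' -> eqm M (p + q) (p' + q').
Proof. by move=> h1 h2 i hi; rewrite !coefD h1 // h2. Qed.
Lemma eqmN M p p' : eqm M p p' -> eqm M (- p) (- p').
Proof. by move=> h1 i hi; rewrite !coefN h1. Qed.
Lemma eqmM M p q p' q' : eqm M p p' -> eqm M q q' -> eqm M (p * q) (p' * q').
Proof.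
move=> h1 h2 i hi; rewrite !coefM; apply: eq_bigr => j _.
have hj : (j <= i)%N by rewrite -ltnS.
rewrite h1 ?h2 //; [exact: leq_ltn_trans (leq_subr _ _) hi | exact: leq_ltn_trans hj hi].
Qed.

Lemma coefPp M N s i : (Pp M N s)`_i = if (i < M)%N then s (N%:Z - i%:Z) else 0.
Proof. by rewrite /Pp coef_poly. Qed.

Lemma smul_polyi M N a b i : (i < M)%N ->
  (Pp M N a * Pp M N b)`_i = smul N a b ((N+N)%N%:Z - i%:Z).
Proof.
move=> hi; rewrite /smul ifT; last by lia.
have -> : absz (((N + N)%N%:Z - ((N + N)%N%:Z - i%:Z))%R) = i by lia.
rewrite coefM; apply: eq_bigr => [[k hk]] _ /=.
have hk' : (k <= i)%N by rewrite -ltnS.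
rewrite !coefPp ifT; last exact: leq_ltn_trans hk' hi.
rewrite ifT; last exact: leq_ltn_trans (leq_subr _ _) hi.
congr (_ * b _); lia.
Qed.

Lemma smul_gt N (a b : fser K) p : (N+N)%N%:Z < p -> smul N a b p = 0.
Proof. by move=> h; rewrite /smul ifF //; apply/negbTE; rewrite -ltNge. Qed.

Lemma Pp_shift M N k s : van N%:Z s -> eqm M (Pp M (N+k) s) ('X^k * Pp M N s).
Proof.
move=> hs i hi; rewrite coefXnM !coefPp hi.
case: ltnP => hik; first by apply: hs; lia.
rewrite ifT; last exact: leq_ltn_trans (leq_subr _ _) hi.
congr (s _); lia.
Qed.

Lemma Pp_shift1 M N s : Pp M (N.+1) (shift 1 s) = Pp M N s.
Proof. apply: eq_poly => i _; rewrite /shift; congr (s _); lia. Qed.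

Lemma smul_mono N N' a b p : (N <= N')%N -> van N%:Z a -> van N%:Z b ->
  smul N a b p = smul N' a b p.
Proof.
move=> hN ha hb.
case: (ltP ((N'+N')%N%:Z) p) => hp.
  by rewrite !smul_gt //; lia.
set i := absz (((N' + N')%N%:Z - p)%R).
have hpi : p = (N'+N')%N%:Z - i%:Z by rewrite /i; lia.
rewrite hpi -(@smul_polyi i.+1) // -(subnKC hN).
rewrite (@eqmM _ _ _ _ _ (Pp_shift i.+1 N (N' - N) a ha) (Pp_shift i.+1 N (N' - N) b hb) i (ltnSn i)).
rewrite mulrACA -exprD coefXnM.
case: ltnP => h.
  by rewrite smul_gt //; lia.
rewrite smul_polyi; last exact: leq_ltn_trans (leq_subr _ _) (ltnSn i).
congr smul; lia.
Qed.

Lemma finish M N (S X Y Hx Hy : fser K) p :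
  eqm M ('X^(N+N) * Pp M N S) ('X^N * (Pp M N Hx * Pp M N Y - Pp M N Hy * Pp M N X)) ->
  M = (absz (((N+N+N)%N%:Z - p)%R)).+1 -> p <= (N+N)%N%:Z -> van N%:Z S ->
  S p = smul N Hx Y p - smul N Hy X p.
Proof.
move=> h hM hp hS.
set i0 := absz (((N+N+N)%N%:Z - p)%R).
have := h i0; rewrite hM => /(_ (ltnSn _)) E.
have hN : (N <= i0)%N by lia.
move: E; rewrite !coefXnM coefB (ltnNge i0 N) hN /=.
rewrite !smul_polyi; last 2 first.
- exact: leq_ltn_trans (leq_subr _ _) (ltnSn i0).
- exact: leq_ltn_trans (leq_subr _ _) (ltnSn i0).
have -> : ((N + N)%N%:Z - (i0 - N)%N%:Z) = p by lia.
case: ltnP => h2.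
  by move=> <-; apply: hS; lia.
rewrite coefPp ifT; last exact: leq_ltn_trans (leq_subr _ _) (ltnSn i0).
move=> <-; congr S; lia.
Qed.

Arguments eqm_trans {M p q r}.
Arguments eqm_sym {M p q}.
Arguments eqmM {M p q p' q'}.
Arguments eqmD {M p q p' q'}.
Arguments eqm_refl {M p}.

Lemma key N (X1 Y1 X2 Y2 S1 S2 Hx Hy : fser K) :
  van N%:Z X1 -> van N%:Z Y1 -> van N%:Z X2 -> van N%:Z Y2 ->
  van N%:Z S1 -> van N%:Z S2 -> van N%:Z Hx -> van N%:Z Hy ->
  (forall p, smul N X1 Y2 p - smul N Y1 X2 p = if p == 0 then 1 else 0) ->
  (forall p, smul N S1 Y2 p - smul N Y1 S2 p = - Hy p) ->
  (forall p, smul N X1 S2 p - smul N S1 X2 p = Hx p) ->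
  forall p, S1 p = smul N Hx Y1 p - smul N Hy X1 p /\
            S2 p = smul N Hx Y2 p - smul N Hy X2 p.
Proof.
move=> vX1 vY1 vX2 vY2 vS1 vS2 vHx vHy W0 Wa Wb p.
case: (ltP ((N+N)%N%:Z) p) => hp.
  rewrite !smul_gt // vS1 ?vS2 ?subrr //; lia.
set M := (absz (((N+N+N)%N%:Z - p)%R)).+1.
set P := Pp M N.
have h0 : eqm M (P X1 * P Y2 - P Y1 * P X2) 'X^(N+N).
  move=> i hi; rewrite coefB !smul_polyi // W0 coefXn.
  by case: eqP; case: eqP => //; lia.
have ha : eqm M (P S1 * P Y2 - P Y1 * P S2) (- ('X^N * P Hy)).
  move=> i hi; rewrite coefB !smul_polyi // Wa coefN coefXnM.
  case: ltnP => h; first by rewrite vHy //; lia.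
  rewrite coefPp ifT; last exact: leq_ltn_trans (leq_subr _ _) hi.
  congr (- Hy _); lia.
have hb : eqm M (P X1 * P S2 - P S1 * P X2) ('X^N * P Hx).
  move=> i hi; rewrite coefB !smul_polyi // Wb coefXnM.
  case: ltnP => h; first by rewrite vHx //; lia.
  rewrite coefPp ifT; last exact: leq_ltn_trans (leq_subr _ _) hi.
  congr (Hx _); lia.
have hp' : p <= (N+N)%N%:Z := hp.
split; apply: (@finish M N _ _ _ _ _ p) => //.
- apply: eqm_trans (eqmM (eqm_sym h0) (@eqm_refl M (P S1))) _.
  have -> : (P X1 * P Y2 - P Y1 * P X2) * P S1 =
     P X1 * (P S1 * P Y2 - P Y1 * P S2) + P Y1 * (P X1 * P S2 - P S1 * P X2) by ring.
  apply: eqm_trans (eqmD (eqmM (eqm_refl) ha) (eqmM (eqm_refl) hb)) _.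
  have -> : P X1 * - ('X^N * P Hy) + P Y1 * ('X^N * P Hx) =
     'X^N * (P Hx * P Y1 - P Hy * P X1) by ring.
  exact: eqm_refl.
- apply: eqm_trans (eqmM (eqm_sym h0) (@eqm_refl M (P S2))) _.
  have -> : (P X1 * P Y2 - P Y1 * P X2) * P S2 =
     P X2 * (P S1 * P Y2 - P Y1 * P S2) + P Y2 * (P X1 * P S2 - P S1 * P X2) by ring.
  apply: eqm_trans (eqmD (eqmM (eqm_refl) ha) (eqmM (eqm_refl) hb)) _.
  have -> : P X2 * - ('X^N * P Hy) + P Y2 * ('X^N * P Hx) =
     'X^N * (P Hx * P Y2 - P Hy * P X2) by ring.
  exact: eqm_refl.
Qed.

Lemma smul_ext N (a a' b b' : fser K) p : (forall q, a q = a' q) -> (forall q, b q = b' q) ->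
  smul N a b p = smul N a' b' p.
Proof. by move=> ha hb; rewrite /smul; case: ifP => // _; apply: eq_bigr => k _; rewrite ha hb. Qed.

Lemma smulDl N (a a' b : fser K) p :
  smul N (fun q => a q + a' q) b p = smul N a b p + smul N a' b p.
Proof. rewrite /smul; case: ifP => _; last by rewrite addr0. by rewrite -big_split; apply: eq_bigr => k _; rewrite mulrDl. Qed.

Lemma smulDr N (a b b' : fser K) p :
  smul N a (fun q => b q + b' q) p = smul N a b p + smul N a b' p.
Proof. rewrite /smul; case: ifP => _; last by rewrite addr0. by rewrite -big_split; apply: eq_bigr => k _; rewrite mulrDr. Qed.

Lemma smulC N (a b : fser K) p : smul N a b p = smul N b a p.
Proof.
case: (ltP ((N+N)%N%:Z) p) => hp; first by rewrite !smul_gt.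
set i := absz (((N + N)%N%:Z - p)%R).
have -> : p = (N+N)%N%:Z - i%:Z by rewrite /i; lia.
by rewrite -!(@smul_polyi i.+1) // mulrC.
Qed.

Lemma Pp_mon M N e c : (e <= N)%N -> eqm M (Pp M N (mon e%:Z c)) (c%:P * 'X^(N - e)).
Proof.
move=> he i hi; rewrite coefPp hi coefCM coefXn /mon.
case: eqP => h1; case: eqP => h2 //; try lia; by rewrite ?mulr1 ?mulr0.
Qed.

Lemma smul_monl N e c (b : fser K) p : (e <= N)%N -> van N%:Z b ->
  smul N (mon e%:Z c) b p = c * b (p - e%:Z).
Proof.
move=> he hb.
case: (ltP ((N+N)%N%:Z) p) => hp.
  by rewrite smul_gt // hb ?mulr0 //; lia.
set i := absz (((N + N)%N%:Z - p)%R).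
have -> : p = (N+N)%N%:Z - i%:Z by rewrite /i; lia.
rewrite -(@smul_polyi i.+1) // (eqmM (Pp_mon i.+1 N e c he) eqm_refl) //.
rewrite -mulrA coefCM coefXnM; case: ltnP => h.
  by rewrite hb ?mulr0 //; lia.
rewrite coefPp ifT; last exact: leq_ltn_trans (leq_subr _ _) (ltnSn i).
congr (c * b _); lia.
Qed.

Lemma smul_monr N e c (a : fser K) p : (e <= N)%N -> van N%:Z a ->
  smul N a (mon e%:Z c) p = c * a (p - e%:Z).
Proof. by move=> he ha; rewrite smulC smul_monl. Qed.

Lemma smul_tails N (a b : fser K) p : van (-1) a -> van (-1) b -> -1 <= p ->
  smul N a b p = 0.
Proof.
move=> ha hb hp; rewrite /smul; case: ifP => // _.
rewrite big1 // => [[k hk]] _ /=.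
case: (ltP (-1) (N%:Z - k%:Z)) => h; first by rewrite ha ?mul0r.
by rewrite hb ?mulr0 //; lia.
Qed.

Lemma van_mono (N N' : int) (s : fser K) : N <= N' -> van N s -> van N' s.
Proof. by move=> h hs q hq; apply: hs; lia. Qed.

Lemma van_tm N (ta : fser K) e c a : (forall q, a q = ta q + mon e%:Z c q) ->
  van (-1) ta -> (e <= N)%N -> van N%:Z a.
Proof. by move=> h ht he q hq; rewrite h ht ?add0r /mon ?ifF //; lia. Qed.

Lemma MF N (a b ta tb : fser K) e c e' c' p :
  (forall q, a q = ta q + mon e%:Z c q) -> (forall q, b q = tb q + mon e'%:Z c' q) ->
  van (-1) ta -> van (-1) tb -> (e <= N)%N -> (e' <= N)%N -> -1 <= p ->
  smul N a b p = c * tb (p - e%:Z) + c' * ta (p - e'%:Z) + (if p == (e + e')%N%:Z then c * c' else 0).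
Proof.
move=> ha hb vta vtb he he' hp.
have vta' : van N%:Z ta by apply: van_mono vta; lia.
have vtb' : van N%:Z tb by apply: van_mono vtb; lia.
have vm : forall e0 c0, (e0 <= N)%N -> van N%:Z (mon e0%:Z c0).
  by move=> e0 c0 h q hq; rewrite /mon ifF //; lia.
rewrite (@smul_ext N _ _ _ _ p ha hb) smulDl !smulDr smul_tails // add0r.
rewrite (@smul_monr _ _ _ _ _ he' vta') (@smul_monl _ _ _ _ _ he vtb') (@smul_monl _ _ _ _ _ he (vm e' c' he')).
rewrite /mon.
have -> : (p - e%:Z == e'%:Z) = (p == (e + e')%N%:Z) by apply/eqP/eqP; lia.
by case: (p == _); rewrite ?mulr0 ?addr0; ring.
Qed.

Lemma smul_shiftl N (a b : fser K) p : van N%:Z b ->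
  smul N.+1 (shift 1 a) b p = smul N a b (p - 1).
Proof.
move=> hb.
case: (ltP ((N.+1+N.+1)%N%:Z) p) => hp.
  by rewrite !smul_gt //; lia.
set i := absz ((((N.+1) + (N.+1))%N%:Z - p)%R).
have -> : p = (N.+1+N.+1)%N%:Z - i%:Z by rewrite /i; lia.
rewrite -(@smul_polyi i.+1) // Pp_shift1.
have hb1 := Pp_shift i.+1 N 1 b hb; rewrite addn1 in hb1.
rewrite (eqmM eqm_refl hb1) // mulrCA coefXnM; case: ltnP => h.
  by rewrite smul_gt //; lia.
rewrite smul_polyi; last exact: leq_ltn_trans (leq_subr _ _) (ltnSn i).
congr smul; lia.
Qed.

Lemma smul_shiftr N (a b : fser K) p : van N%:Z b ->
  smul N.+1 b (shift 1 a) p = smul N b a (p - 1).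
Proof. by move=> hb; rewrite smulC smul_shiftl // smulC. Qed.
End Aux.
Arguments van {K}. Arguments eqm {K}. Arguments Pp {K}. Arguments key {K}. Arguments MF {K}.
Arguments smul_mono {K}. Arguments smul_shiftl {K}. Arguments smul_shiftr {K}. Arguments van_tm {K}.
Arguments smul_gt {K}. Arguments smul_ext {K}. Arguments van_mono {K}. Arguments smulC {K}.
Section Main.
Variable K : comNzRingType.
Variable d : var -> K -> K.
Variable coord : var -> K.
Variables g f : nat -> K.
Variable u : K.
Hypothesis hder : forall a, is_derivation (d a).
Hypothesis hc1 : forall a, d a (coord a) = 1.
Hypothesis hc0 : forall a b, a <> b -> d a (coord b) = 0.

Lemma dD a r s : d a (r + s) = d a r + d a s. Proof. by case: (hder a). Qed.
Lemma d0 a : d a 0 = 0.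
Proof. have := dD a 0 0; rewrite addr0 => /eqP; rewrite -subr_eq0 => /eqP h. have -> : d a 0 = - (d a 0 - (d a 0 + d a 0)) by ring. by rewrite h oppr0. Qed.
Lemma dN a r : d a (- r) = - d a r.
Proof. apply/eqP; rewrite -subr_eq0 opprK -dD addNr d0 //. Qed.
Lemma d_mon a e c p : d a (mon e c p) = mon e (d a c) p.
Proof. by rewrite /mon; case: ifP => // _; rewrite d0. Qed.
Lemma mon0 e p : mon e (0 : K) p = 0. Proof. by rewrite /mon; case: ifP. Qed.
Lemma d_sum a m n (F : nat -> K) : d a (\sum_(m <= k < n) F k) = \sum_(m <= k < n) d a (F k).
Proof. by apply: (big_morph (d a) (dD a) (d0 a)). Qed.

Lemma A_cf (h : nat -> K) n p :
  A h n p = if (0 <= p) && (p < n%:Z) then h (absz (p - n%:Z)) else 0.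
Proof.
rewrite /A /mon.
case: ifP => hp.
  have k0in : (n - absz p)%N \in index_iota 1 n.+1 by rewrite mem_index_iota; lia.
  rewrite (bigD1_seq _ k0in (iota_uniq _ _)) /= ifT; last by apply/eqP; lia.
  rewrite big1_seq ?addr0; first by congr h; lia.
  move=> k /andP[hk]; rewrite mem_index_iota => hk'.
  by rewrite ifF //; apply/negbTE/eqP; move/eqP: hk; lia.
rewrite big1_seq // => k; rewrite mem_index_iota => /andP[_ hk].
by rewrite ifF //; apply/negbTE/eqP; move/negbT: hp; lia.
Qed.

Lemma dA a (h : nat -> K) n p : d a (A h n p) = A (fun k => d a (h k)) n p.
Proof. by rewrite /A d_sum; apply: eq_bigr => k _; rewrite d_mon. Qed.


Definition tl (s : fser K) : fser K := fun q => if q < 0 then s q else 0.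
Lemma tl_van s : van (-1) (tl s).
Proof. by move=> r hr; rewrite /tl ifF //; apply/negbTE; rewrite -leNgt; lia. Qed.
Lemma decomp (s : fser K) e c : (forall q, 0 <= q -> s q = mon e%:Z c q) ->
  forall q, s q = tl s q + mon e%:Z c q.
Proof.
move=> h q; rewrite /tl; case: ltP => hq; last by rewrite add0r h.
by rewrite /mon ifF ?addr0 //; apply/negbTE/eqP; lia.
Qed.

Notation D1 a := (dser d a (phi1 coord g)).
Notation D2 a := (dser d a (phi2 coord f)).

Lemma D1_neg a q : q < 0 -> D1 a q = d a (g (absz q)).
Proof. by move=> h; rewrite /dser /phi1 h. Qed.
Lemma D2_neg a q : q < 0 -> D2 a q = d a (f (absz q)).
Proof. by move=> h; rewrite /dser /phi2 h. Qed.

Lemma D1_nn a q : 0 <= q -> D1 a q =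
   if q == 0 then - d a (coord Vy) else d a (coord (Vz (absz q))).
Proof. by move=> h; rewrite /dser /phi1 ifF ?(fun_if (d a)) ?dN //; apply/negbTE; rewrite -leNgt. Qed.
Lemma D2_nn a q : 0 <= q -> D2 a q =
   if q == 0 then d a (coord Vx) else d a (coord (Vt (absz q).-1)).
Proof. by move=> h; rewrite /dser /phi2 ifF ?(fun_if (d a)) //; apply/negbTE; rewrite -leNgt. Qed.

Lemma D1x q : D1 Vx q = tl (D1 Vx) q + mon 0%N%:Z 0 q.
Proof. apply: decomp => r hr; rewrite D1_nn // !hc0 // oppr0 mon0; by case: ifP. Qed.
Lemma D1y q : D1 Vy q = tl (D1 Vy) q + mon 0%N%:Z (-1) q.
Proof.
apply: decomp => r hr; rewrite D1_nn // hc1 hc0 // /mon.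
Qed.
Lemma D1t m q : D1 (Vt m) q = tl (D1 (Vt m)) q + mon 0%N%:Z 0 q.
Proof. apply: decomp => r hr; rewrite D1_nn // !hc0 // oppr0 mon0; by case: ifP. Qed.
Lemma D1z m q : D1 (Vz m) q = tl (D1 (Vz m)) q + mon m%:Z (if (0 < m)%N then 1 else 0) q.
Proof.
apply: decomp => r hr; rewrite D1_nn // hc0 // oppr0 /mon.
case: eqP => h0.
  by rewrite h0; case: m => // m; rewrite ifF.
have [->|hne] := eqVneq m (absz r).
  by rewrite hc1 ifT; [rewrite ifT //; lia | apply/eqP; lia].
rewrite hc0; last by case=> h; rewrite h eqxx in hne.
by rewrite ifF //; apply/eqP; lia.
Qed.
Lemma D2x q : D2 Vx q = tl (D2 Vx) q + mon 0%N%:Z 1 q.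
Proof.
apply: decomp => r hr; rewrite D2_nn // hc1 hc0 // /mon.
Qed.
Lemma D2y q : D2 Vy q = tl (D2 Vy) q + mon 0%N%:Z 0 q.
Proof. apply: decomp => r hr; rewrite D2_nn // !hc0 // mon0; by case: ifP. Qed.
Lemma D2z m q : D2 (Vz m) q = tl (D2 (Vz m)) q + mon 0%N%:Z 0 q.
Proof. apply: decomp => r hr; rewrite D2_nn // !hc0 // mon0; by case: ifP. Qed.
Lemma D2t m q : D2 (Vt m) q = tl (D2 (Vt m)) q + mon m.+1%:Z 1 q.
Proof.
apply: decomp => r hr; rewrite D2_nn // /mon.
case: eqP => h0.
  by rewrite hc0 // h0.
have [->|hne] := eqVneq m (absz r).-1.
  by rewrite hc1 ifT //; apply/eqP; lia.
rewrite hc0; last by case=> h; rewrite h eqxx in hne.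
by rewrite ifF //; apply/eqP; lia.
Qed.


Lemma vtm N (a : fser K) e c : (forall q, a q = tl a q + mon e%:Z c q) -> (e <= N)%N -> van N%:Z a.
Proof. by move=> h he; apply: (van_tm N (tl a) e c a h (tl_van a) he). Qed.

Lemma MF2 N (a b : fser K) e c e' c' p :
  (forall q, a q = tl a q + mon e%:Z c q) -> (forall q, b q = tl b q + mon e'%:Z c' q) ->
  (e <= N)%N -> (e' <= N)%N -> -1 <= p ->
  smul N a b p = c * tl b (p - e%:Z) + c' * tl a (p - e'%:Z) + (if p == (e + e')%N%:Z then c * c' else 0).
Proof. by move=> ha hb he he' hp; apply: MF => //; apply: tl_van. Qed.
Arguments MF2 {N a b e c e' c' p}.
Arguments vtm {N a e c}.

Lemma wedge_def a b p : wedge d coord g f a b p =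
  smul (maxn (vdeg a) (vdeg b)) (D1 a) (D2 b) (p - (zweight a + zweight b)%N%:Z)
  - smul (maxn (vdeg a) (vdeg b)) (D1 b) (D2 a) (p - (zweight a + zweight b)%N%:Z).
Proof. by []. Qed.

Lemma Htx n p : dser d Vx (Ht coord g n) p = A (fun k => d Vx (g k)) n p.
Proof. by rewrite /dser /Ht dD dN d_mon hc0 // mon0 oppr0 add0r dA. Qed.
Lemma Hty n p : dser d Vy (Ht coord g n) p = - mon n%:Z 1 p + A (fun k => d Vy (g k)) n p.
Proof. by rewrite /dser /Ht dD dN d_mon hc1 dA. Qed.

Lemma vanA (h : nat -> K) n : van n%:Z (A h n).
Proof. move=> q hq; rewrite A_cf ifF //; apply/negbTE; lia. Qed.
Lemma vanmon e c : van e%:Z (mon (K:=K) e%:Z c).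
Proof. by move=> q hq; rewrite /mon ifF //; apply/negbTE/eqP; lia. Qed.

Ltac ifs := repeat match goal with |- context [if ?b then _ else _] => case: (boolP b) => ? end.

Lemma tcase (hier : DF_hierarchy d coord g f) m p :
  D1 (Vt m) p = pb d m.+1 (Ht coord g m.+1) (phi1 coord g) p /\
  D2 (Vt m) p = pb d m.+1 (Ht coord g m.+1) (phi2 coord f) p.
Proof.
rewrite /pb; apply: key.
- exact: vtm D1x _.
- exact: vtm D1y _.
- exact: vtm D2x _.
- exact: vtm D2y _.
- exact: vtm (D1t m) _.
- exact: vtm (D2t m) _.
- by move=> q hq; rewrite Htx vanA.
- by move=> q hq; rewrite Hty vanA // vanmon // oppr0 addr0.
- move=> q; case: (ltP q 0) => hq.
    have vv : forall a, van 0%N%:Z (a : fser K) -> van 0%N%:Z a by [].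
    rewrite -!(smul_mono 0 m.+1 _ _ q) //; try exact: vtm D1x _; try exact: vtm D1y _;
      try exact: vtm D2x _; try exact: vtm D2y _.
    have := hier Vx Vy q hq; rewrite wedge_def /= subr0 => ->.
    by rewrite ifF //; apply/eqP; lia.
  have hq1 : -1 <= q by lia.
  rewrite (MF2 D1x D2y) // (MF2 D1y D2x) //.
  rewrite /tl; ifs; try (exfalso; lia); ring.
- move=> q; case: (ltP q 0) => hq.
    have := hier (Vt m) Vy q hq; rewrite wedge_def /= maxn0 subr0 => ->.
    rewrite Hty A_cf /mon ifF; last by apply/negbTE; lia.
    by rewrite ifF ?oppr0 ?addr0 ?oppr0 //; apply/eqP; lia.
  have hq1 : -1 <= q by lia.
  rewrite (MF2 (D1t m) D2y) // (MF2 D1y (D2t m)) //.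
  rewrite Hty A_cf /mon /tl; ifs; try (exfalso; lia); rewrite ?D1_neg //; ring.
- move=> q; case: (ltP q 0) => hq.
    have := hier (Vt m) Vx q hq; rewrite wedge_def /= maxn0 subr0 => h.
    rewrite Htx A_cf ifF; last by apply/negbTE; lia.
    by apply/eqP; rewrite -oppr_eq0 opprB h.
  have hq1 : -1 <= q by lia.
  rewrite (MF2 D1x (D2t m)) // (MF2 (D1t m) D2x) //.
  rewrite Htx A_cf /mon /tl; ifs; try (exfalso; lia); rewrite ?D1_neg //; ring.
Qed.


Lemma B_eq j p : B d f u j p = if (2 <= j)%N then - A f j p - mon 0 (d (zvar j) u) p
   else - mon 0 (d (zvar 1) u) p.
Proof. by []. Qed.

Lemma Hzx m p : dser d Vx (Hz d coord f u m.+1) p =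
  (if (1 <= m)%N then - mon m.+1%:Z 1 p - A (fun k => d Vx (f k)) m.+1 p else 0)
  - mon 0 (d Vx (d (Vz m) u)) p.
Proof.
rewrite /dser /Hz B_eq; case: m => [|m] /=.
  by rewrite dN d_mon add0r.
by rewrite !dD !dN d_mon hc1 dA d_mon; ring.
Qed.
Lemma Hzy m p : dser d Vy (Hz d coord f u m.+1) p =
  (if (1 <= m)%N then - A (fun k => d Vy (f k)) m.+1 p else 0)
  - mon 0 (d Vy (d (Vz m) u)) p.
Proof.
rewrite /dser /Hz B_eq; case: m => [|m] /=.
  by rewrite dN d_mon add0r.
by rewrite !dD !dN d_mon hc0 // mon0 dA d_mon; ring.
Qed.

Lemma van_shift N (s : fser K) : van N%:Z s -> van N.+1%:Z (shift 1 s).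
Proof. by move=> h q hq; rewrite /shift h //; lia. Qed.

Lemma zcase (hier : DF_hierarchy d coord g f) (hcomm : forall a b r, d a (d b r) = d b (d a r))
  (hg : g 1%N = d Vx u) (hf : f 1%N = d Vy u) m p :
  shift 1 (D1 (Vz m)) p = pb d m.+1 (Hz d coord f u m.+1) (phi1 coord g) p /\
  shift 1 (D2 (Vz m)) p = pb d m.+1 (Hz d coord f u m.+1) (phi2 coord f) p.
Proof.
rewrite /pb; apply: key.
- exact: vtm D1x _.
- exact: vtm D1y _.
- exact: vtm D2x _.
- exact: vtm D2y _.
- by apply: van_shift; exact: vtm (D1z m) _.
- by apply: van_shift; exact: vtm (D2z m) _.
- move=> q hq; rewrite Hzx A_cf /mon; ifs; try (exfalso; lia); ring.
- move=> q hq; rewrite Hzy A_cf /mon; ifs; try (exfalso; lia); ring.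
- move=> q; case: (ltP q 0) => hq.
    rewrite -!(smul_mono 0 m.+1 _ _ q) //; try exact: vtm D1x _; try exact: vtm D1y _;
      try exact: vtm D2x _; try exact: vtm D2y _.
    have := hier Vx Vy q hq; rewrite wedge_def /= subr0 => ->.
    by rewrite ifF //; apply/eqP; lia.
  have hq1 : -1 <= q by lia.
  rewrite (MF2 D1x D2y) // (MF2 D1y D2x) //.
  rewrite /tl; ifs; try (exfalso; lia); ring.
- move=> q.
  rewrite smul_shiftl; last exact: vtm D2y _.
  rewrite smul_shiftr; last exact: vtm D1y _.
  case: (ltP q 0) => hq.
    have := hier (Vz m) Vy q hq; rewrite wedge_def /= maxn0 => ->.
    rewrite Hzy A_cf /mon; ifs; try (exfalso; lia); ring.
  have hq1 : -1 <= q - 1 by lia.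
  rewrite (MF2 (D1z m) D2y) // (MF2 D1y (D2z m)) //.
  rewrite Hzy A_cf /mon /tl.
  have -> : q - 1 - m%:Z = q - m.+1%:Z by lia.
  case: (eqVneq q 0) => [q0|q0].
    subst q; rewrite (_ : (0:int) - 1 - 0%N%:Z = -1) //.
    ifs; try (exfalso; lia); rewrite ?D1_neg ?D2_neg //= hf hcomm; ring.
  ifs; try (exfalso; lia); rewrite ?D1_neg ?D2_neg //; ring.
- move=> q.
  rewrite smul_shiftr; last exact: vtm D1x _.
  rewrite smul_shiftl; last exact: vtm D2x _.
  case: (ltP q 0) => hq.
    have := hier (Vz m) Vx q hq; rewrite wedge_def /= maxn0 => h.
    rewrite -[LHS]opprK opprB h oppr0.
    rewrite Hzx A_cf /mon; ifs; try (exfalso; lia); ring.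
  have hq1 : -1 <= q - 1 by lia.
  rewrite (MF2 D1x (D2z m)) // (MF2 (D1z m) D2x) //.
  rewrite Hzx A_cf /mon /tl.
  have -> : q - 1 - m%:Z = q - m.+1%:Z by lia.
  case: (eqVneq q 0) => [q0|q0].
    subst q; rewrite (_ : (0:int) - 1 - 0%N%:Z = -1) //.
    ifs; try (exfalso; lia); rewrite ?D1_neg ?D2_neg //= hg hcomm; ring.
  ifs; try (exfalso; lia); rewrite ?D1_neg ?D2_neg //; ring.
Qed.

End Main.

Theorem mainTheorem3 (K : comRingType) (d : var -> K -> K) (coord : var -> K)
    (g f : nat -> K) (u : K) :
  (forall a, is_derivation (d a)) ->
  (forall a b r, d a (d b r) = d b (d a r)) ->
  (forall a, d a (coord a) = 1) ->
  (forall a b, a <> b -> d a (coord b) = 0) ->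
  DF_hierarchy d coord g f ->
  g 1%N = d Vx u -> f 1%N = d Vy u ->
  (forall n : nat, (1 <= n)%N -> forall p : int,
      dser d (tvar n) (phi1 coord g) p = pb d n (Ht coord g n) (phi1 coord g) p /\
      dser d (tvar n) (phi2 coord f) p = pb d n (Ht coord g n) (phi2 coord f) p) /\
  (forall j : nat, (1 <= j)%N -> forall p : int,
      shift 1 (dser d (zvar j) (phi1 coord g)) p
        = pb d j (Hz d coord f u j) (phi1 coord g) p /\
      shift 1 (dser d (zvar j) (phi2 coord f)) p
        = pb d j (Hz d coord f u j) (phi2 coord f) p).
Proof.
move=> hder hcomm hc1 hc0 hier hg hf; split.
- move=> [|m] // _ p; exact: (@tcase _ _ _ _ _ hder hc1 hc0 hier m p).
- move=> [|m] // _ p; exact: (@zcase _ _ _ _ _ u hder hc1 hc0 hier hcomm hg hf m p).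
Qed.
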